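(* Let $m\in\{0,1,2,\dots\}$ and let $\lambda$ be a lattice identity. Then $\lambda$ holds in the subgroup lattice $\mathrm{Sub}\,\mathbf A$ of every Abelian group $\mathbf A$ satisfying $mx=0$ (i.e., $x+\dots+x=0$ with $m$ summands; for $m=0$ this means all Abelian groups) if and only if the dual of $\lambda$ holds in all these subgroup lattices.
   Context: A lattice identity is $p=q$ (universally quantified) for lattice terms $p,q$ built from variables with $\vee,\wedge$. The dual of an identity is obtained by interchanging $\vee$ and $\wedge$ on both sides. In $\mathrm{Sub}\,\mathbf A$, meet is intersection and join is the generated subgroup (sum). *)

(* Defs.v *)
From mathcomp Require Import all_boot all_algebra.
Set Implicit Arguments. Unset Strict Implicit. Unset Printing Implicit Defensive.
Import GRing.Theory.
Local Open Scope ring_scope.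

Inductive lterm : Type :=
  | LVar of nat
  | LJoin of lterm & lterm
  | LMeet of lterm & lterm.

Fixpoint ldual (t : lterm) : lterm :=
  match t with
  | LVar i => LVar i
  | LJoin a b => LMeet (ldual a) (ldual b)
  | LMeet a b => LJoin (ldual a) (ldual b)
  end.

Definition is_subgroup (A : zmodType) (S : A -> Prop) : Prop :=
  S 0 /\ (forall x y, S x -> S y -> S (x - y)).

Definition sg_meet (A : zmodType) (S T : A -> Prop) : A -> Prop :=
  fun x => S x /\ T x.

Definition sg_join (A : zmodType) (S T : A -> Prop) : A -> Prop :=
  fun x => forall U : A -> Prop, is_subgroup U ->
    (forall y, S y -> U y) -> (forall y, T y -> U y) -> U x.

Fixpoint sg_eval (A : zmodType) (v : nat -> A -> Prop) (t : lterm) : A -> Prop :=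
  match t with
  | LVar i => v i
  | LJoin a b => sg_join (sg_eval v a) (sg_eval v b)
  | LMeet a b => sg_meet (sg_eval v a) (sg_eval v b)
  end.

Definition holds_in_Sub (A : zmodType) (p q : lterm) : Prop :=
  forall v : nat -> A -> Prop, (forall i, is_subgroup (v i)) ->
    forall x : A, sg_eval v p x <-> sg_eval v q x.

Definition holds_in_Sub_exp (m : nat) (p q : lterm) : Prop :=
  forall A : zmodType, (forall x : A, x *+ m = 0) -> holds_in_Sub A p q.

(* Main.v *)
Require Import Defs.
From mathcomp Require Import all_boot all_order all_algebra ring lra zify.
From Stdlib Require Import ClassicalEpsilon Classical.
Set Implicit Arguments. Unset Strict Implicit. Unset Printing Implicit Defensive.
Import Order.TTheory GRing.Theory Num.Theory.
Local Open Scope ring_scope.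

Section Gen.
Variable A : zmodType.
Implicit Types S T : A -> Prop.

Lemma sg0 S : is_subgroup S -> S 0.
Proof. by case. Qed.
Lemma sgB S x y : is_subgroup S -> S x -> S y -> S (x - y).
Proof. by case=> _ H; apply: H. Qed.
Lemma sgN S x : is_subgroup S -> S x -> S (- x).
Proof. by move=> H Hx; rewrite -sub0r; apply: sgB => //; apply: sg0. Qed.
Lemma sgD S x y : is_subgroup S -> S x -> S y -> S (x + y).
Proof. by move=> H Hx Hy; rewrite -[y]opprK; apply: sgB => //; apply: sgN. Qed.
Lemma sgMn S x k : is_subgroup S -> S x -> S (x *+ k).
Proof.
move=> H Hx; elim: k => [|k IH]; first by rewrite mulr0n; apply: sg0.
by rewrite mulrS; apply: sgD.
Qed.
Lemma sgMz S x k : is_subgroup S -> S x -> S (x *~ k).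
Proof. by move=> H Hx; case: k => k /=; [apply: sgMn|apply: sgN => //; apply: sgMn]. Qed.

Lemma join_sub S T : is_subgroup (sg_join S T).
Proof.
split; first by move=> U HU _ _; apply: sg0.
by move=> x y Hx Hy U HU HS HT; apply: sgB => //; [apply: Hx|apply: Hy].
Qed.

Lemma joinL S T x : S x -> sg_join S T x.
Proof. by move=> Hx U _ HS _; apply: HS. Qed.
Lemma joinR S T x : T x -> sg_join S T x.
Proof. by move=> Hx U _ _ HT; apply: HT. Qed.

Lemma joinP S T x : is_subgroup S -> is_subgroup T ->
  (sg_join S T x <-> exists s t, S s /\ T t /\ x = s + t).
Proof.
move=> HS HT; split.
  move=> Hx; apply: (Hx (fun z => exists s t, S s /\ T t /\ z = s + t)).
  - split; first by exists 0, 0; rewrite addr0; split; [exact: (sg0 HS)|split; [exact: (sg0 HT)|]].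
    move=> a b [s [t [Hs [Ht ->]]]] [s' [t' [Hs' [Ht' ->]]]].
    exists (s - s'), (t - t'); split; first by apply: sgB.
    split; first by apply: sgB.
    by rewrite opprD addrACA.
  - by move=> y Hy; exists y, 0; rewrite addr0; split=> //; split=> //; exact: (sg0 HT).
  - by move=> y Hy; exists 0, y; rewrite add0r; split; [exact: (sg0 HS)|].
move=> [s [t [Hs [Ht ->]]]]; apply: (sgD (join_sub S T)).
  exact: (@joinL S T s Hs). exact: (@joinR S T t Ht).
Qed.

Lemma join_ext S S' T T' : (forall x, S x <-> S' x) -> (forall x, T x <-> T' x) ->
  forall x, sg_join S T x <-> sg_join S' T' x.
Proof.
move=> ES ET x; split=> Hx U HU H1 H2; apply: Hx => // y Hy.
- by apply: H1; apply/ES. - by apply: H2; apply/ET.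
- by apply: H1; apply/ES. - by apply: H2; apply/ET.
Qed.

Lemma join_min S T U : is_subgroup U -> (forall y, S y -> U y) -> (forall y, T y -> U y) ->
  forall x, sg_join S T x -> U x.
Proof. by move=> HU H1 H2 x Hx; apply: Hx. Qed.

Lemma eval_sub (v : nat -> A -> Prop) : (forall i, is_subgroup (v i)) ->
  forall t, is_subgroup (sg_eval v t).
Proof.
move=> Hv; elim=> [i|a IHa b IHb|a IHa b IHb] /=; first exact: Hv.
  exact: join_sub.
split; first by split; apply: sg0.
by move=> x y [Hxa Hxb] [Hya Hyb]; split; apply: sgB.
Qed.

Lemma eval_ext (v v' : nat -> A -> Prop) : (forall i x, v i x <-> v' i x) ->
  forall t x, sg_eval v t x <-> sg_eval v' t x.
Proof.
move=> E; elim=> [i|a IHa b IHb|a IHa b IHb] x /=; first exact: E.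
  exact: join_ext.
by rewrite /sg_meet IHa IHb.
Qed.
End Gen.

Lemma ldualK t : ldual (ldual t) = t.
Proof. by elim: t => //= a -> b ->. Qed.

Section Hom.
Variables (G A : zmodType) (f : G -> A).
Hypothesis fB : forall a b, f (a - b) = f a - f b.

Lemma f0 : f 0 = 0.
Proof. by rewrite -(subrr 0) fB subrr. Qed.
Lemma fN a : f (- a) = - f a.
Proof. by rewrite -sub0r fB f0 sub0r. Qed.
Lemma fD a b : f (a + b) = f a + f b.
Proof. by rewrite -{1}[b]opprK fB fN opprK. Qed.

Lemma fMn a k : f (a *+ k) = f a *+ k.
Proof. by elim: k => [|k IH]; rewrite ?mulr0n ?f0 // !mulrS fD IH. Qed.
Lemma fMz a k : f (a *~ k) = f a *~ k.
Proof. by case: k => k /=; rewrite ?fN fMn. Qed.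

Definition pre (v : nat -> A -> Prop) := fun i (a : G) => v i (f a).

Lemma pre_sub S : is_subgroup S -> is_subgroup (fun a => S (f a)).
Proof. move=> HS; split=> [|x y Hx Hy] /=; first by rewrite f0; apply: sg0.
by rewrite fB; apply: sgB. Qed.

Lemma img_sub : is_subgroup (fun y => exists a, f a = y).
Proof. split=> [|x y [a <-] [b <-]]; first by exists 0; apply: f0.
by exists (a - b); apply: fB. Qed.

Lemma eval_pre_le (v : nat -> A -> Prop) : (forall i, is_subgroup (v i)) ->
  forall t a, sg_eval (pre v) t a -> sg_eval v t (f a).
Proof.
move=> Hv; elim=> [i|s IHs t IHt|s IHs t IHt] a //=.
  apply: (join_min (U := fun a => sg_join (sg_eval v s) (sg_eval v t) (f a))).
  - by apply: pre_sub; apply: join_sub.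
  - by move=> y /IHs Hy; apply: joinL.
  - by move=> y /IHt Hy; apply: joinR.
by move=> [H1 H2]; split; [apply: IHs|apply: IHt].
Qed.

Lemma eval_img (v : nat -> A -> Prop) : (forall i, is_subgroup (v i)) ->
  (forall i y, v i y -> exists a, f a = y) ->
  forall t y, sg_eval v t y -> exists a, f a = y.
Proof.
move=> Hv Hi; elim=> [i|s IHs t IHt|s IHs t IHt] y //=; first exact: Hi.
  by apply: (join_min (U := fun y => exists a, f a = y)); [apply: img_sub| |].
by move=> [H1 _]; apply: IHs.
Qed.

Lemma eval_pre (v : nat -> A -> Prop) : (forall i, is_subgroup (v i)) ->
  (forall i y, v i y -> exists a, f a = y) ->
  forall t a, sg_eval (pre v) t a <-> sg_eval v t (f a).
Proof.
move=> Hv Hi t; split; first exact: eval_pre_le.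
elim: t a => [i|s IHs t IHt|s IHs t IHt] a //=; last first.
  by move=> [H1 H2]; split; [apply: IHs|apply: IHt].
have Hpv : forall i, is_subgroup (pre v i) by move=> i; apply: pre_sub.
move/(joinP _ (eval_sub Hv s) (eval_sub Hv t)) => [y [z [Hy [Hz E]]]].
have [b Hb] := eval_img Hv Hi Hy.
apply/(joinP _ (eval_sub Hpv s) (eval_sub Hpv t)).
exists b, (a - b); split; first by apply: IHs; rewrite Hb.
split; last by rewrite addrC subrK.
by apply: IHt; rewrite fB E Hb addrC addKr.
Qed.
End Hom.

Lemma witness (A : zmodType) (v : nat -> A -> Prop) : (forall i, is_subgroup (v i)) ->
  forall t x, sg_eval v t x -> exists W : seq A,
  forall (G : zmodType) (g : G -> A), (forall a b, g (a - b) = g a - g b) ->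
  (forall w, List.In w W -> exists a, g a = w) ->
  forall k, g k = x -> sg_eval (pre g v) t k.
Proof.
move=> Hv; elim=> [i|s IHs t IHt|s IHs t IHt] x /=.
- by move=> Hx; exists [::] => G g gB _ k Hk; rewrite /pre Hk.
- move/(joinP _ (eval_sub Hv s) (eval_sub Hv t)) => [y [z [Hy [Hz ->]]]].
  have [Ws HWs] := IHs _ Hy; have [Wt HWt] := IHt _ Hz.
  exists (y :: Ws ++ Wt) => G g gB HW k Hk.
  have Hpv : forall i, is_subgroup (pre g v i) by move=> i; apply: pre_sub.
  have [ky Hky] := HW y (or_introl erefl).
  apply/(joinP _ (eval_sub Hpv s) (eval_sub Hpv t)).
  exists ky, (k - ky); split.
    apply: (HWs G g gB) => // w Hw; apply: HW; right; apply List.in_or_app; left.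
    exact: Hw.
  split; last by rewrite addrC subrK.
  apply: (HWt G g gB) => //; last by rewrite gB Hk Hky addrC addKr.
  by move=> w Hw; apply: HW; right; apply List.in_or_app; right.
- move=> [Hs Ht].
  have [Ws HWs] := IHs _ Hs; have [Wt HWt] := IHt _ Ht.
  exists (Ws ++ Wt) => G g gB HW k Hk; split.
    by apply: (HWs G g gB) => // w Hw; apply: HW; apply List.in_or_app; left.
  by apply: (HWt G g gB) => // w Hw; apply: HW; apply List.in_or_app; right.
Qed.

Definition isZ (q : rat) := exists z : int, q = z%:~R.
Definition cZ (a b : rat) := isZ (a - b).

Lemma isZ_int z : isZ z%:~R. Proof. by exists z. Qed.
Lemma isZ0 : isZ 0. Proof. by exists 0. Qed.
Lemma isZB a b : isZ a -> isZ b -> isZ (a - b).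
Proof. by move=> [x ->] [y ->]; exists (x - y); rewrite intrB. Qed.
Lemma isZN a : isZ a -> isZ (- a).
Proof. by move=> H; rewrite -sub0r; apply: isZB => //; apply: isZ0. Qed.
Lemma isZD a b : isZ a -> isZ b -> isZ (a + b).
Proof. by move=> Ha Hb; rewrite -[b]opprK; apply: isZB => //; apply: isZN. Qed.
Lemma isZMz a k : isZ a -> isZ (a *~ k).
Proof. by move=> [x ->]; exists (x * k); rewrite -mulrzr -intrM. Qed.
Lemma isZM a b : isZ a -> isZ b -> isZ (a * b).
Proof. by move=> [x ->] [y ->]; exists (x * y); rewrite intrM. Qed.

Lemma cZ_refl a : cZ a a. Proof. by rewrite /cZ subrr; apply: isZ0. Qed.
Lemma cZ_sym a b : cZ a b -> cZ b a.
Proof. by rewrite /cZ => /isZN; rewrite opprB. Qed.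
Lemma cZ_trans a b c : cZ a b -> cZ b c -> cZ a c.
Proof. by rewrite /cZ => H1 H2; have := isZD H1 H2; rewrite addrA subrK. Qed.
Lemma cZD a b c d : cZ a b -> cZ c d -> cZ (a + c) (b + d).
Proof. by rewrite /cZ => H1 H2; have := isZD H1 H2; rewrite addrACA opprD. Qed.
Lemma cZN a b : cZ a b -> cZ (- a) (- b).
Proof. by rewrite /cZ => H; have := isZN H; rewrite opprB opprK addrC. Qed.
Lemma cZB a b c d : cZ a b -> cZ c d -> cZ (a - c) (b - d).
Proof. by move=> H1 H2; apply: cZD => //; apply: cZN. Qed.
Lemma cZMz a b k : cZ a b -> cZ (a *~ k) (b *~ k).
Proof. by rewrite /cZ => H; have := isZMz k H; rewrite mulrzBl. Qed.
Lemma cZ_isZ a b : cZ a b -> isZ b -> isZ a.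
Proof. by rewrite /cZ => H1 H2; have := isZD H1 H2; rewrite subrK. Qed.
Lemma isZ_cZ0 a : isZ a <-> cZ a 0.
Proof. by rewrite /cZ subr0. Qed.

Section Glue.
Variable G : zmodType.
Implicit Types U V : G -> Prop.

Definition homZ U (psi : G -> rat) :=
  forall a b, U a -> U b -> cZ (psi (a - b)) (psi a - psi b).

Lemma homZ0 U psi : is_subgroup U -> homZ U psi -> cZ (psi 0) 0.
Proof.
move=> HU Hp; have := Hp 0 0 (sg0 HU) (sg0 HU); by rewrite !subrr.
Qed.
Lemma homZN U psi a : is_subgroup U -> homZ U psi -> U a -> cZ (psi (- a)) (- psi a).
Proof.
move=> HU Hp Ha; have := Hp 0 a (sg0 HU) Ha; rewrite sub0r => H.
apply: cZ_trans H _; rewrite -[X in cZ _ X]sub0r; apply: cZB; first exact: homZ0 Hp.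
exact: cZ_refl.
Qed.
Lemma homZD U psi a b : is_subgroup U -> homZ U psi -> U a -> U b ->
  cZ (psi (a + b)) (psi a + psi b).
Proof.
move=> HU Hp Ha Hb; have := Hp a (- b) Ha (sgN HU Hb); rewrite opprK => H.
apply: cZ_trans H _; apply: cZD; first exact: cZ_refl.
by have := cZN (homZN HU Hp Hb); rewrite opprK.
Qed.
Lemma homZMz U psi a k : is_subgroup U -> homZ U psi -> U a ->
  cZ (psi (a *~ k)) (psi a *~ k).
Proof.
move=> HU Hp Ha.
have Hn : forall m : nat, cZ (psi (a *+ m)) (psi a *+ m).
  elim=> [|m IH]; first by rewrite !mulr0n; apply: homZ0 Hp.
  rewrite !mulrS; apply: cZ_trans (homZD HU Hp Ha (sgMn m HU Ha)) _.
  by apply: cZD; [apply: cZ_refl|].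
case: k => m /=; first exact: Hn.
apply: cZ_trans (homZN HU Hp (sgMn m.+1 HU Ha)) _; exact: cZN.
Qed.

Definition sumP U V := fun z => exists u w, U u /\ V w /\ z = u + w.

Lemma sumP_sub U V : is_subgroup U -> is_subgroup V -> is_subgroup (sumP U V).
Proof.
move=> HU HV; split; first by exists 0, 0; rewrite addr0; split; [exact: sg0 HU|split; [exact: sg0 HV|]].
move=> x y [u [w [Hu [Hw ->]]]] [u' [w' [Hu' [Hw' ->]]]].
exists (u - u'), (w - w'); split; first exact: sgB.
by split; [exact: sgB|rewrite opprD addrACA].
Qed.

Lemma glue U V psi phi : is_subgroup U -> is_subgroup V -> homZ U psi -> homZ V phi ->
  (forall z, U z -> V z -> cZ (psi z) (phi z)) ->
  exists psi', homZ (sumP U V) psi' /\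
    (forall u, U u -> cZ (psi' u) (psi u)) /\ (forall w, V w -> cZ (psi' w) (phi w)).
Proof.
move=> HU HV Hp Hf Hag.
pose P z (uw : G * G) := U uw.1 /\ V uw.2 /\ z = uw.1 + uw.2.
pose psi' z := let uw := epsilon (inhabits (0, 0)) (P z) in psi uw.1 + phi uw.2.
have K : forall u w, U u -> V w -> cZ (psi' (u + w)) (psi u + phi w).
  move=> u w Hu Hw; rewrite /psi'.
  have : P (u + w) (epsilon (inhabits (0, 0)) (P (u + w))).
    by apply: epsilon_spec; exists (u, w).
  case: (epsilon _ _) => u' w' [/= Hu' [Hw' E]].
  have Ed : u - u' = w' - w.
    have -> : u - u' = (u + w) - (u' + w) by rewrite opprD addrACA subrr addr0.
    by rewrite E opprD addrACA subrr add0r.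
  have H1 := Hp _ _ Hu Hu'. have H2 := Hf _ _ Hw' Hw.
  have Hz : V (u - u') by rewrite Ed; apply: sgB.
  have H3 := Hag _ (sgB HU Hu Hu') Hz; rewrite [in phi _]Ed in H3.
  move: H1 H2 H3; rewrite /cZ => H1 H2 H3.
  have := isZB (isZB H1 H3) H2.
  set X := psi (u - u'); set Y := phi (w' - w).
  have -> : X - (psi u - psi u') - (X - Y) - (Y - (phi w' - phi w)) =
            psi u' + phi w' - (psi u + phi w) by ring.
  done.
exists psi'; split.
  move=> a b [u [w [Hu [Hw ->]]]] [u' [w' [Hu' [Hw' ->]]]].
  have -> : u + w - (u' + w') = (u - u') + (w - w') by rewrite opprD addrACA.
  apply: cZ_trans (K _ _ (sgB HU Hu Hu') (sgB HV Hw Hw')) _.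
  have H1 := Hp _ _ Hu Hu'; have H2 := Hf _ _ Hw Hw'.
  have H3 := K _ _ Hu Hw; have H4 := K _ _ Hu' Hw'.
  move: H1 H2 H3 H4; rewrite /cZ => H1 H2 H3 H4.
  have := isZB (isZD H1 H2) (isZB H3 H4).
  set a1 := psi (u - u'); set a2 := phi (w - w'); set a3 := psi' (u + w); set a4 := psi' (u' + w').
  have -> : a1 - (psi u - psi u') + (a2 - (phi w - phi w')) -
     (a3 - (psi u + phi w) - (a4 - (psi u' + phi w'))) = a1 + a2 - (a3 - a4) by ring.
  done.
split.
  move=> u Hu; have := K _ _ Hu (sg0 HV); rewrite addr0 => H.
  apply: cZ_trans H _; rewrite -[X in cZ _ X]addr0; apply: cZD; first exact: cZ_refl.
  exact: homZ0 Hf.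
move=> w Hw; have := K _ _ (sg0 HU) Hw; rewrite add0r => H.
apply: cZ_trans H _; rewrite -[X in cZ _ X]add0r; apply: cZD; last exact: cZ_refl.
exact: homZ0 Hp.
Qed.
End Glue.

Lemma nat_min (P : nat -> Prop) : (exists n, P n) ->
  exists n, P n /\ forall k, (k < n)%N -> ~ P k.
Proof.
move=> [n Hn]; apply: NNPP => Hno.
have H : forall N k, (k <= N)%N -> ~ P k.
  elim=> [|N IH] k Hk.
    move: Hk; rewrite leqn0 => /eqP -> H0; apply: Hno; exists 0%N; split=> // j.
  move=> HP; apply: Hno; exists k; split=> // j Hj; apply: IH; rewrite -ltnS.
  exact: leq_trans Hj Hk.
exact: (H n n (leqnn n) Hn).
Qed.

Lemma int_ideal (I : int -> Prop) : is_subgroup I ->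
  (forall k, I k -> k = 0) \/
  exists d : int, 0 < d /\ I d /\ forall k, I k -> exists j, k = d * j.
Proof.
move=> HI; case: (classic (exists k, I k /\ k <> 0)) => [[k [Hk k0]]|Hno]; last first.
  left=> k Hk; apply: NNPP => Hk0; apply: Hno; by exists k.
right.
have [n [Hn Hmin]] : exists n, I (n.+1)%:Z /\ forall j, (j < n)%N -> ~ I (j.+1)%:Z.
  apply: nat_min; move: Hk k0; case: k => [[|m]|m] Hk k0 //; first by exists m.
  by exists m; have := sgN HI Hk; rewrite NegzE opprK.
clear k Hk k0; exists n.+1%:Z; split=> //; split=> // k Hk.
exists (k %/ n.+1%:Z)%Z.
have Hr : I (k %% n.+1%:Z)%Z.
  rewrite /modz; apply: sgB => //; rewrite mulrC -mulrzz; exact: sgMz.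
have r0 : (0 <= k %% n.+1%:Z)%Z by apply: modz_ge0.
have r1 : (k %% n.+1%:Z < n.+1%:Z)%Z by apply: ltz_pmod.
case Er: (k %% n.+1%:Z)%Z r0 r1 Hr => [[|r]|r] // r0 r1 Hr.
  by rewrite {1}(divz_eq k n.+1%:Z) Er addr0 mulrC.
exfalso; apply: (Hmin r) => //.
Qed.

Lemma notZ_inv (d : int) : 1 < d -> ~ isZ (d%:~R^-1).
Proof.
move=> Hd [z Hz].
have : (z * d)%:~R = 1 :> rat.
  rewrite intrM -Hz mulVf //; rewrite intr_eq0; apply/eqP => d0; move: Hd; rewrite d0.
  done.
rewrite -[X in _ = X](mulr1z (1 : rat)) => /intr_inj E.
by case: (lerP z 0) => Hz0; nia.
Qed.

Section Estep.
Variable G : zmodType.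

Lemma ideal_sub U (y : G) : is_subgroup U -> is_subgroup (fun k : int => U (y *~ k)).
Proof.
move=> HU; split=> [|a b Ha Hb] /=; first by rewrite mulr0z; apply: sg0.
by rewrite mulrzBr; apply: sgB.
Qed.

Lemma e_exists U psi (y : G) : is_subgroup U -> homZ U psi ->
  exists e : rat, forall k, U (y *~ k) -> cZ (e *~ k) (psi (y *~ k)).
Proof.
move=> HU Hp; case: (int_ideal (ideal_sub y HU)) => [H0|[d [d0 [Hd Hdiv]]]].
  exists 0 => k Hk; rewrite (H0 _ Hk) mulr0z mulr0z; apply: cZ_sym; exact: homZ0 Hp.
exists (psi (y *~ d) / d%:~R) => k Hk; have [j ->] := Hdiv _ Hk.
rewrite !mulrzA -[_ / _ *~ d]mulrzr divfK; last by rewrite intr_eq0 gt_eqF.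
by apply: cZ_sym; apply: (homZMz _ HU Hp Hd).
Qed.

Lemma sep_e U (y : G) : is_subgroup U -> ~ U y ->
  exists e : rat, ~ isZ e /\ forall k, U (y *~ k) -> isZ (e *~ k).
Proof.
move=> HU Hy; case: (int_ideal (ideal_sub y HU)) => [H0|[d [d0 [Hd Hdiv]]]].
  exists (2%:~R)^-1; split; first exact: notZ_inv.
  by move=> k Hk; rewrite (H0 _ Hk) mulr0z; apply: isZ0.
have d1 : 1 < d.
  rewrite lt_neqAle; apply/andP; split; last by [].
  by apply/eqP => d1; apply: Hy; rewrite -d1 in Hd; move: Hd; rewrite mulr1z.
exists (d%:~R)^-1; split; first exact: notZ_inv.
move=> k Hk; have [j ->] := Hdiv _ Hk.
rewrite mulrzA -[_^-1 *~ d]mulrzr mulVf ?intr_eq0 ?gt_eqF //.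
by rewrite -mulrzr mul1r; apply: isZ_int.
Qed.
End Estep.

Section Zn.
Variable n : nat.
Local Notation ZV := {ffun 'I_n -> int}.
Local Notation QV := {ffun 'I_n -> rat}.

Definition pair (c : QV) (s : ZV) : rat := \sum_i c i * (s i)%:~R.

Lemma pairB c a b : pair c (a - b) = pair c a - pair c b.
Proof. by rewrite /pair -sumrB; apply: eq_bigr => i _; rewrite !ffunE intrB mulrBr. Qed.
Lemma pairBl c c' s : pair (c - c') s = pair c s - pair c' s.
Proof. by rewrite /pair -sumrB; apply: eq_bigr => i _; rewrite !ffunE mulrBl. Qed.
Lemma pairDl c c' s : pair (c + c') s = pair c s + pair c' s.
Proof. by rewrite /pair -big_split; apply: eq_bigr => i _; rewrite !ffunE mulrDl. Qed.
Lemma pair0l s : pair 0 s = 0.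
Proof. by rewrite /pair big1 // => i _; rewrite ffunE mul0r. Qed.

Definition eb (j : 'I_n) : ZV := [ffun i => ((i == j)%:R : int)].

Lemma decomp (a : ZV) : a = \sum_j eb j *~ a j.
Proof.
apply/ffunP => i; rewrite sum_ffunE (bigD1 i) //= big1 => [|j Hj].
  by rewrite ffunMzE ffunE eqxx mulr1n intz addr0.
by rewrite ffunMzE ffunE eq_sym (negbTE Hj) mul0rz.
Qed.

Definition lineP (y : ZV) := fun z : ZV => exists k, z = y *~ k.

Lemma lineP_sub y : is_subgroup (lineP y).
Proof.
split; first by exists 0; rewrite mulr0z.
by move=> a b [k ->] [l ->]; exists (k - l); rewrite mulrzBr.
Qed.

Lemma ext_step U psi (y : ZV) (j : 'I_n) (e : rat) : is_subgroup U -> homZ U psi ->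
  y j != 0 -> (forall k, U (y *~ k) -> cZ (e *~ k) (psi (y *~ k))) ->
  exists psi', homZ (sumP U (lineP y)) psi' /\
    (forall u, U u -> cZ (psi' u) (psi u)) /\ cZ (psi' y) e.
Proof.
move=> HU Hp yj He.
pose phi (z : ZV) := e * (z j)%:~R / (y j)%:~R.
have yj' : (y j)%:~R != 0 :> rat by rewrite intr_eq0.
have Hf : homZ (lineP y) phi.
  move=> a b _ _; rewrite /phi !ffunE intrB mulrBr mulrBl; exact: cZ_refl.
have Hag : forall z, U z -> lineP y z -> cZ (psi z) (phi z).
  move=> z Hz [k Ek]; subst z; apply: cZ_sym.
  rewrite /phi ffunMzE mulrzz intrM mulrA mulrAC mulfK //.
  by rewrite mulrzr; apply: He.
have [psi' [H1 [H2 H3]]] := glue HU (lineP_sub y) Hp Hf Hag.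
exists psi'; split=> //; split=> //.
have := H3 y; rewrite /phi mulfK // => H; apply: H; exists 1; by rewrite mulr1z.
Qed.

Lemma ext_list (js : seq 'I_n) : forall U psi, is_subgroup U -> homZ U psi ->
  exists U' psi', is_subgroup U' /\ homZ U' psi' /\
   (forall u, U u -> U' u /\ cZ (psi' u) (psi u)) /\ (forall j, j \in js -> U' (eb j)).
Proof.
elim: js => [|j js IH] U psi HU Hp.
  by exists U, psi; split=> //; split=> //; split=> // u Hu; split=> //; apply: cZ_refl.
have [e He] := e_exists (eb j) HU Hp.
have ej : eb j j != 0 by rewrite ffunE eqxx.
have [psi1 [H1 [H2 H3]]] := ext_step HU Hp ej He.
have HU1 := sumP_sub HU (lineP_sub (eb j)).
have [U2 [psi2 [HU2 [Hp2 [Hag Hj]]]]] := IH _ _ HU1 H1.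
exists U2, psi2; split=> //; split=> //; split.
  move=> u Hu; have Hu1 : sumP U (lineP (eb j)) u.
    by exists u, 0; split=> //; split; [exists 0; rewrite mulr0z|rewrite addr0].
  have [Hu2 Hc] := Hag _ Hu1; split=> //; exact: cZ_trans Hc (H2 _ Hu).
move=> i; rewrite in_cons => /orP [/eqP ->|Hi]; last exact: Hj.
have Hu1 : sumP U (lineP (eb j)) (eb j).
  by exists 0, (eb j); split; [exact: sg0 HU|split; [exists 1; rewrite mulr1z|rewrite add0r]].
by have [] := Hag _ Hu1.
Qed.

Lemma hom_sum U psi (a : ZV) (r : seq 'I_n) : is_subgroup U -> homZ U psi ->
  (forall j, U (eb j)) ->
  U (\sum_(j <- r) eb j *~ a j) /\
  cZ (psi (\sum_(j <- r) eb j *~ a j)) (\sum_(j <- r) psi (eb j) *~ a j).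
Proof.
move=> HU Hp Hb; elim: r => [|j r [IH1 IH2]].
  by rewrite !big_nil; split; [exact: sg0 HU|exact: homZ0 Hp].
rewrite !big_cons; have Hj := sgMz (a j) HU (Hb j).
split; first exact: sgD.
apply: cZ_trans (homZD HU Hp Hj IH1) _; apply: cZD => //.
exact: (homZMz _ HU Hp (Hb j)).
Qed.

Lemma ext_all U psi : is_subgroup U -> homZ U psi ->
  exists c : QV, forall u, U u -> cZ (pair c u) (psi u).
Proof.
move=> HU Hp.
have [U' [psi' [HU' [Hp' [Hag Hb]]]]] := ext_list (enum 'I_n) HU Hp.
have Hb' : forall j, U' (eb j) by move=> j; apply: Hb; rewrite mem_enum.
exists [ffun j => psi' (eb j)] => u Hu.
have [_ H] := Hag _ Hu; apply: cZ_trans _ H.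
have [_ H2] := hom_sum u (index_enum 'I_n) HU' Hp' Hb'.
rewrite -decomp in H2; apply: cZ_sym; apply: cZ_trans H2 _.
rewrite /pair; apply: cZ_sym; rewrite /cZ; apply/isZ_cZ0.
rewrite -sumrB big1 ?subrr; first exact: isZ0.
by move=> i _; rewrite ffunE mulrzr subrr.
Qed.
End Zn.

Section Dual.
Variable n : nat.
Local Notation ZV := {ffun 'I_n -> int}.
Local Notation QV := {ffun 'I_n -> rat}.

Definition perp (S : ZV -> Prop) := fun c : QV => forall s, S s -> isZ (pair c s).

Lemma perp_sub S : is_subgroup (perp S).
Proof.
split=> [s _|c c' Hc Hc' s Hs]; first by rewrite pair0l; apply: isZ0.
by rewrite pairBl; apply: isZB; [apply: Hc|apply: Hc'].
Qed.

Lemma perp_join S T c : perp (sg_join S T) c <-> perp S c /\ perp T c.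
Proof.
split.
  by move=> H; split=> s Hs; apply: H; [apply: joinL|apply: joinR].
move=> [HS HT] s Hs; apply: (join_min (U := fun s => isZ (pair c s))) Hs => //.
split=> [|a b Ha Hb] /=; last by rewrite pairB; apply: isZB.
rewrite /pair big1; first exact: isZ0.
by move=> i _; rewrite ffunE mulr0.
Qed.

Lemma perp_sep S x : is_subgroup S -> ~ S x -> exists c, perp S c /\ ~ isZ (pair c x).
Proof.
move=> HS Hx; have [e [He Hk]] := sep_e HS Hx.
have [j xj] : exists j, x j != 0.
  apply: NNPP => H; apply: Hx; have -> : x = 0.
    by apply/ffunP => j; rewrite ffunE; apply/eqP; apply: NNPP => Hj; apply: H; exists j; apply/negP.
  exact: sg0 HS.
have Hp0 : homZ S (fun _ => 0) by move=> a b _ _; rewrite subrr; apply: cZ_refl.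
have He' : forall k, S (x *~ k) -> cZ (e *~ k) 0 by move=> k /Hk; rewrite /cZ subr0.
have [psi' [H1 [H2 H3]]] := ext_step HS Hp0 xj He'.
have HU := sumP_sub HS (lineP_sub x).
have [c Hc] := ext_all HU H1.
exists c; split.
  move=> s Hs; have Hs' : sumP S (lineP x) s.
    by exists s, 0; split=> //; split; [exists 0; rewrite mulr0z|rewrite addr0].
  apply/isZ_cZ0; apply: cZ_trans (Hc _ Hs') (H2 _ Hs).
move=> Hcx; apply: He.
have Hx' : sumP S (lineP x) x.
  by exists 0, x; split; [exact: sg0 HS|split; [exists 1; rewrite mulr1z|rewrite add0r]].
apply: (cZ_isZ _ Hcx); apply: cZ_sym; exact: cZ_trans (Hc _ Hx') H3.
Qed.

Lemma perp_meet S T c : is_subgroup S -> is_subgroup T ->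
  perp (sg_meet S T) c -> exists a b, perp S a /\ perp T b /\ c = a + b.
Proof.
move=> HS HT Hc.
have Hp0 : homZ S (fun _ => 0) by move=> a b _ _; rewrite subrr; apply: cZ_refl.
have Hpc : homZ T (pair c) by move=> a b _ _; rewrite pairB; apply: cZ_refl.
have Hag : forall z, S z -> T z -> cZ 0 (pair c z).
  by move=> z Hs Ht; rewrite /cZ sub0r; apply: isZN; exact: (Hc z (conj Hs Ht)).
have [psi [H1 [H2 H3]]] := glue HS HT Hp0 Hpc Hag.
have [a Ha] := ext_all (sumP_sub HS HT) H1.
exists a, (c - a); split.
  move=> s Hs; have Hs' : sumP S T s.
    by exists s, 0; split=> //; split; [exact: sg0 HT|rewrite addr0].
  apply/isZ_cZ0; apply: cZ_trans (Ha _ Hs') (H2 _ Hs).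
split; last by rewrite addrC subrK.
move=> t Ht; have Ht' : sumP S T t by exists 0, t; split; [exact: sg0 HS|split; [|rewrite add0r]].
rewrite pairBl; have := cZ_trans (Ha _ Ht') (H3 _ Ht); rewrite /cZ => H.
by have := isZN H; rewrite opprB.
Qed.

Lemma dual_eval (u : nat -> ZV -> Prop) : (forall i, is_subgroup (u i)) ->
  forall t c, sg_eval (fun i => perp (u i)) (ldual t) c <-> perp (sg_eval u t) c.
Proof.
move=> Hu; elim=> [i|s IHs t IHt|s IHs t IHt] c /=; first by [].
  by rewrite /sg_meet IHs IHt perp_join.
have Hps : forall i, is_subgroup (perp (u i)) by move=> i; apply: perp_sub.
rewrite (join_ext (S' := perp (sg_eval u s)) (T' := perp (sg_eval u t))) //.
rewrite (joinP _ (perp_sub _) (perp_sub _)); split.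
  move=> [a [b [Ha [Hb ->]]]] z [Hzs Hzt]; rewrite pairDl; apply: isZD; [exact: Ha|exact: Hb].
move/(perp_meet (eval_sub Hu s) (eval_sub Hu t)) => [a [b [Ha [Hb ->]]]].
by exists a, b.
Qed.
End Dual.

Lemma pair_eb n (c : {ffun 'I_n -> rat}) j k : pair c (eb j *~ k) = c j * k%:~R.
Proof.
rewrite /pair (bigD1 j) //= big1 => [|i Hi].
  by rewrite ffunMzE ffunE eqxx mulr1n intz addr0.
by rewrite ffunMzE ffunE (negbTE Hi) mul0rz mulr0.
Qed.

Lemma pair_isZ n (c : {ffun 'I_n -> rat}) s : (forall j, isZ (c j)) -> isZ (pair c s).
Proof.
move=> Hc; rewrite /pair; elim: (index_enum _) => [|i r IH]; first by rewrite big_nil; apply: isZ0.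
by rewrite big_cons; apply: isZD => //; apply: isZM => //; apply: isZ_int.
Qed.

Lemma inW (A : zmodType) (W : seq A) w : List.In w W -> exists i, (i < size W)%N /\ nth 0 W i = w.
Proof.
elim: W => [|a W IH] //= [->|/IH [i [Hi Ei]]]; first by exists 0%N.
by exists i.+1.
Qed.

Section Gmap.
Variables (A : zmodType) (W : seq A).
Local Notation N := (size W).
Definition gmap (k : {ffun 'I_N -> int}) : A := \sum_(i < N) nth 0 W i *~ k i.
Lemma gmapB a b : gmap (a - b) = gmap a - gmap b.
Proof. by rewrite /gmap -sumrB; apply: eq_bigr => i _; rewrite !ffunE mulrzBr. Qed.
Lemma gmap_eb (i : 'I_N) : gmap (eb i) = nth 0 W i.
Proof.
rewrite /gmap (bigD1 i) //= big1 => [|j Hj].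
  by rewrite ffunE eqxx mulr1n mulr1z addr0.
by rewrite ffunE (negbTE Hj) mulr0n mulr0z.
Qed.
Lemma gmap_onto w : List.In w W -> exists a, gmap a = w.
Proof. by move/inW => [i [Hi <-]]; exists (eb (Ordinal Hi)); rewrite gmap_eb. Qed.
End Gmap.

Lemma stage12 (m : nat) (A : zmodType) (v : nat -> A -> Prop) p q x :
  (forall a : A, a *+ m = 0) -> (forall i, is_subgroup (v i)) ->
  sg_eval v p x -> ~ sg_eval v q x ->
  exists n (u : nat -> {ffun 'I_n -> int} -> Prop), (forall i, is_subgroup (u i)) /\
    (forall i j, u i (eb j *~ m%:Z)) /\
    exists c, sg_eval (fun i => perp (u i)) (ldual q) c /\
            ~ sg_eval (fun i => perp (u i)) (ldual p) c.
Proof.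
move=> Hm Hv Hp Hq.
have [W HW] := witness Hv Hp.
pose W' := x :: W.
have gB := @gmapB A W'.
exists (size W'), (pre (@gmap A W') v).
have Hu : forall i, is_subgroup (pre (@gmap A W') v i) by move=> i; apply: pre_sub.
split=> //; split.
  move=> i j; rewrite /pre (fMz gB) -pmulrn Hm; exact: sg0 (Hv i).
have [k0 Hk0] := @gmap_onto A W' x (or_introl erefl).
have Hpk : sg_eval (pre (@gmap A W') v) p k0.
  apply: (HW _ (@gmap A W') gB) => // w Hw; apply: gmap_onto; right; exact: Hw.
have Hqk : ~ sg_eval (pre (@gmap A W') v) q k0.
  by move=> H; apply: Hq; rewrite -Hk0; apply: eval_pre_le.
have [c [Hc1 Hc2]] := perp_sep (eval_sub Hu q) Hqk.
exists c; split; first by apply/dual_eval.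
by move/(dual_eval Hu) => H; apply: Hc2; apply: H.
Qed.

Lemma expZp (p' : nat) (y : 'I_p'.+1) : y *+ p'.+1 = 0.
Proof. by apply/val_inj; rewrite Zp_mulrn /= modnMl. Qed.

Lemma Zp1Mn (p' : nat) (r : 'I_p'.+1) : Zp1 *+ (val r) = r.
Proof.
by apply/val_inj; rewrite Zp_mulrn /= modnMml mul1n modn_small.
Qed.

Lemma kerZp (p' : nat) (z : int) : (Zp1 : 'I_p'.+1) *~ z = 0 -> exists q, z = q * p'.+1%:Z.
Proof.
move=> H; exists (z %/ p'.+1%:Z)%Z.
have r0 : (0 <= z %% p'.+1%:Z)%Z by apply: modz_ge0.
have r1 : (z %% p'.+1%:Z < p'.+1%:Z)%Z by apply: ltz_pmod.
have E := divz_eq z p'.+1%:Z.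
move: r0 r1 E H; set q := (z %/ _)%Z; set r := (z %% _)%Z.
case: r => [k|k] //= _ r1 E; rewrite E mulrzDr mulrzA -pmulrn expZp add0r => H.
have : val (Zp1 *+ k : 'I_p'.+1) = 0%N by rewrite pmulrn H.
rewrite Zp_mulrn /=.
move: E; clear H; case: p' q r1 => [|p'] q r1 E.
  by move: r1; rewrite ltz_nat ltnS leqn0 => /eqP -> _; rewrite addr0.
rewrite modnMml mul1n modn_small; last by move: r1; rewrite ltz_nat.
by move=> k0; rewrite k0 addr0.
Qed.

Lemma stage3 (m' n : nat) (u : nat -> {ffun 'I_n -> int} -> Prop) p q c :
  (forall i, is_subgroup (u i)) -> (forall i j, u i (eb j *~ m'.+1%:Z)) ->
  sg_eval (fun i => perp (u i)) (ldual q) c ->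
  ~ sg_eval (fun i => perp (u i)) (ldual p) c ->
  exists v : nat -> {ffun 'I_n -> 'I_m'.+1} -> Prop, (forall i, is_subgroup (v i)) /\
    exists y, sg_eval v (ldual q) y /\ ~ sg_eval v (ldual p) y.
Proof.
move=> Hu Hm Hc1 Hc2.
pose w := fun i => perp (u i).
have Hw : forall i, is_subgroup (w i) by move=> i; apply: perp_sub.
pose M : rat := (m'.+1%:Z)%:~R.
have M0 : M != 0 by rewrite intr_eq0.
pose gq (a : {ffun 'I_n -> int}) : {ffun 'I_n -> rat} := [ffun j => (a j)%:~R / M].
have gqB : forall a b, gq (a - b) = gq a - gq b.
  by move=> a b; apply/ffunP => j; rewrite !ffunE intrB mulrBl.
have Him : forall i y, w i y -> exists a, gq a = y.
  move=> i y Hy; exists [ffun j => numq (y j * M)]; apply/ffunP => j.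
  have [z Hz] := Hy _ (Hm i j); rewrite pair_eb in Hz.
  by rewrite !ffunE -/M Hz numq_int -Hz mulfK.
have [c' Hc'] := eval_img gqB Hw Him Hc1.
pose w' := pre gq w.
have Hw' : forall i, is_subgroup (w' i) by move=> i; apply: pre_sub.
have E1 := eval_pre gqB Hw Him.
pose h (a : {ffun 'I_n -> int}) : {ffun 'I_n -> 'I_m'.+1} := [ffun j => Zp1 *~ a j].
have hB : forall a b, h (a - b) = h a - h b.
  by move=> a b; apply/ffunP => j; rewrite !ffunE mulrzBr.
have Hker : forall i a, h a = 0 -> w' i a.
  move=> i a Ha s Hs; apply: pair_isZ => j.
  have : h a j = 0 by rewrite Ha ffunE.
  rewrite ffunE => /kerZp [z Ez]; rewrite ffunE Ez intrM mulfK //; exact: isZ_int.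
pose v := fun i y => exists a, h a = y /\ w' i a.
have Hv : forall i, is_subgroup (v i).
  move=> i; split; first by exists 0; split; [exact: f0 hB|exact: sg0 (Hw' i)].
  move=> x y [a [<- Ha]] [b [<- Hb]]; exists (a - b); split; first exact: hB.
  exact: (sgB (Hw' i) Ha Hb).
have Hsurj : forall i y, v i y -> exists a, h a = y by move=> i y [a [Ha _]]; exists a.
have E2 : forall t a, sg_eval (pre h v) t a <-> sg_eval v t (h a) by apply: (eval_pre hB Hv Hsurj).
have E3 : forall t a, sg_eval (pre h v) t a <-> sg_eval w' t a.
  apply: (@eval_ext _ (pre h v) w') => i a; split; last by move=> Ha; exists a.
  move=> [b [Eb Hb]].
  have -> : a = (a - b) + b by rewrite subrK.
  apply: (sgD (Hw' i)) => //; apply: Hker; rewrite hB Eb subrr //.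
exists v; split=> //; exists (h c'); split.
  by apply/E2; apply/E3; apply/E1; rewrite Hc'.
by move/E2/E3/E1; rewrite Hc'.
Qed.

Lemma fail_dual (m : nat) (A : zmodType) (v : nat -> A -> Prop) p q x :
  (forall a : A, a *+ m = 0) -> (forall i, is_subgroup (v i)) ->
  sg_eval v p x -> ~ sg_eval v q x ->
  exists (B : zmodType) (w : nat -> B -> Prop), (forall b : B, b *+ m = 0) /\
    (forall i, is_subgroup (w i)) /\ exists y, sg_eval w (ldual q) y /\ ~ sg_eval w (ldual p) y.
Proof.
move=> Hm Hv Hp Hq.
have [n [u [Hu [Hum [c [Hc1 Hc2]]]]]] := stage12 Hm Hv Hp Hq.
case: m Hm Hum => [|m'] Hm Hum.
  exists {ffun 'I_n -> rat}, (fun i => perp (u i)); split; first by move=> b; rewrite mulr0n.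
  split; first by move=> i; apply: perp_sub.
  by exists c.
have [w [Hw Hy]] := stage3 Hu Hum Hc1 Hc2.
exists {ffun 'I_n -> 'I_m'.+1}, w; split=> //.
by move=> b; apply/ffunP => j; rewrite ffunMnE expZp ffunE.
Qed.

Lemma one_dir m p q : holds_in_Sub_exp m p q -> holds_in_Sub_exp m (ldual p) (ldual q).
Proof.
move=> H A HA v Hv x; split=> Hx; apply: NNPP => Hn.
  have [B [w [HB [Hw [y [Hy1 Hy2]]]]]] := fail_dual HA Hv Hx Hn.
  rewrite !ldualK in Hy1 Hy2; apply: Hy2; apply/(H B HB w Hw y); exact: Hy1.
have [B [w [HB [Hw [y [Hy1 Hy2]]]]]] := fail_dual HA Hv Hx Hn.
rewrite !ldualK in Hy1 Hy2; apply: Hy2; apply/(H B HB w Hw y); exact: Hy1.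
Qed.

Theorem corollary5p2 (m : nat) (p q : lterm) :
  holds_in_Sub_exp m p q <-> holds_in_Sub_exp m (ldual p) (ldual q).
Proof.
split; first exact: one_dir.
by move/one_dir; rewrite !ldualK.
Qed.
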